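(* A finite transitive permutation group $G$ whose point stabilizers have order $2$ has the EKR property if (i) $G$ has a cyclic Sylow $2$-subgroup, or (ii) $G$ is a nilpotent group.
   Context: For a permutation group $G$ on a finite set $V$, a subset $\mathcal{F}\subseteq G$ is intersecting if for all $g,h\in\mathcal{F}$ there is $v\in V$ with $g(v)=h(v)$. $G$ has the Erdős–Ko–Rado (EKR) property if the maximum size of an intersecting set of $G$ equals the maximum order of a point stabilizer $G_v$, $v\in V$. *)

(* Defs.v *)
From mathcomp Require Import all_boot all_fingroup all_solvable.
Set Implicit Arguments. Unset Strict Implicit. Unset Printing Implicit Defensive.
Local Open Scope group_scope.

Definition intersecting (T : finType) (G : {group {perm T}})
  (F : {set {perm T}}) : Prop :=
  F \subset G /\ forall g h, g \in F -> h \in F -> exists v : T, g v = h v.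

Definition intersectingb (T : finType) (G : {group {perm T}})
  (F : {set {perm T}}) : bool :=
  (F \subset G) && [forall g in F, forall h in F, exists v : T, g v == h v].

Definition EKR (T : finType) (G : {group {perm T}}) : Prop :=
  \max_(F : {set {perm T}} | intersectingb G F) #|F|
  = \max_(v : T) #|'C_G[v | 'P]|.

Lemma intersectingP (T : finType) (G : {group {perm T}}) (F : {set {perm T}}) :
  reflect (intersecting G F) (intersectingb G F).
Proof.
apply: (iffP andP) => [[sFG /forallP H]|[sFG H]]; split=> //.
- move=> g h gF hF; have /implyP/(_ gF)/forallP/(_ h)/implyP/(_ hF) := H g.
  by case/existsP=> v /eqP; exists v.
- apply/forallP=> g; apply/implyP=> gF; apply/forallP=> h; apply/implyP=> hF.
  by have [v Ev] := H g h gF hF; apply/existsP; exists v; rewrite Ev.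
Qed.

(* Main.v *)
Require Import Defs.
From mathcomp Require Import all_boot all_fingroup all_solvable.
Set Implicit Arguments. Unset Strict Implicit. Unset Printing Implicit Defensive.
Local Open Scope group_scope.

Section S.
Variables (T : finType) (G : {group {perm T}}).
Hypothesis htr : [transitive G, on [set: T] | 'P].
Hypothesis hst : forall v : T, #|'C_G[v | 'P]| = 2.

Lemma stab_uniq v a b : a \in 'C_G[v | 'P] -> b \in 'C_G[v | 'P] ->
  a != 1 -> b != 1 -> a = b.
Proof.
move=> aC bC a1 b1.
have := cardsD1 1 'C_G[v | 'P]; rewrite group1 hst add1n => -[] /esym/eqP/cards1P[z Ez].
have : a \in 'C_G[v | 'P] :\ 1 by rewrite in_setD1 a1.
have : b \in 'C_G[v | 'P] :\ 1 by rewrite in_setD1 b1.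
by rewrite Ez !in_set1 => /eqP -> /eqP ->.
Qed.

Lemma stab_inv v a : a \in 'C_G[v | 'P] -> a * a = 1.
Proof.
move=> aC; have := order_dvdG aC; rewrite hst order_dvdn => /eqP.
by rewrite expgS expg1.
Qed.

Lemma stab_memP v a : reflect (a \in G /\ a v = v) (a \in 'C_G[v | 'P]).
Proof.
rewrite in_setI; apply: (iffP andP) => -[aG H]; split=> //.
  by move/astab1P: H.
by apply/astab1P.
Qed.

Lemma stab_conj u w a b : a \in 'C_G[u | 'P] -> b \in 'C_G[w | 'P] ->
  a != 1 -> b != 1 -> exists2 y, y \in G & b = a ^ y.
Proof.
move=> aC bC a1 b1.
have [y yG wE] := atransP2 htr (in_setT u) (in_setT w).
exists y => //; apply: (stab_uniq bC) => //; last by rewrite conjg_eq1.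
move/stab_memP: aC => [aG au]; apply/stab_memP; split; first by rewrite groupJ.
by rewrite wE /= conjgE !permM /aperm permK au.
Qed.

Lemma diff_stab g h u : g \in G -> h \in G -> g u = h u ->
  h * g^-1 \in 'C_G[u | 'P].
Proof.
move=> gG hG e; apply/stab_memP; split; first by rewrite groupM ?groupV.
by rewrite permM -e permK.
Qed.

Lemma no_triangle u w x a b :
  ((exists2 P : {group {perm T}}, P \in 'Syl_2(G) & cyclic P) \/ nilpotent G) ->
  a \in 'C_G[u | 'P] -> b \in 'C_G[w | 'P] -> b * a \in 'C_G[x | 'P] ->
  a != 1 -> b != 1 -> b * a != 1 -> False.
Proof.
move=> hc aC bC cC a1 b1 c1.
have [y yG bE] := stab_conj aC bC a1 b1.
have [z zG cE] := stab_conj aC cC a1 c1.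
have aG : a \in G by case/stab_memP: aC.
have bG : b \in G by case/stab_memP: bC.
have ai : a^-1 = a by apply/eqP; rewrite eq_invg_mul (stab_inv aC).
have bi : b^-1 = b by apply/eqP; rewrite eq_invg_mul (stab_inv bC).
have ci : (b * a)^-1 = b * a by apply/eqP; rewrite eq_invg_mul (stab_inv cC).
case: hc => [[P PS cP] | nilG].
- have cab : commute a b by rewrite /commute -{1}ci invMg ai bi.
  have cAB : commute <[a]> <[b]> by apply: centC; apply: cents_cycle.
  have two2 : 2.-nat 2 by apply: pnat_id.
  have pa : 2.-group <[a]>.
    by apply: (pnat_dvd _ two2); rewrite -(hst u); apply: order_dvdG.
  have pb : 2.-group <[b]>.
    by apply: (pnat_dvd _ two2); rewrite -(hst w); apply: order_dvdG.
  have pV : 2.-group (<[a]> <*> <[b]>) by rewrite comm_joingE // pgroupM pa pb.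
  have sVG : <[a]> <*> <[b]> \subset G by rewrite join_subG !cycle_subG aG bG.
  have [Q QS sVQ] := Sylow_superset sVG pV.
  have PS' : 2.-Sylow(G) P by rewrite inE in PS.
  have [t tG QE] := Sylow_trans PS' QS.
  have cQ : cyclic Q by rewrite QE cyclicJ.
  have cV := cyclicS sVQ cQ.
  have := eq_subG_cyclic cV (joing_subl _ _) (joing_subr _ _).
  have ob : #[b] = #[a] by rewrite bE orderJ.
  rewrite (_ : #|<[b]>%G| = #|<[a]>%G|) ?eqxx; last exact: ob.
  move=> /eqP /= eab.
  have bA : b \in <[a]> by rewrite eab cycle_id.
  have bCu : b \in 'C_G[u | 'P] by apply: (subsetP _ _ bA); rewrite cycle_subG.
  have ba := stab_uniq bCu aC b1 a1.
  by move: c1; rewrite ba (stab_inv aC) eqxx.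
- have key : forall n, a \in 'L_n.+1(G).
    elim=> [|n IH]; first by rewrite lcn1.
    have cm : (b * a)^-1 \in 'L_n.+2(G).
      rewrite lcnSn; have := mem_commg IH yG.
      by rewrite /commg bE invMg -conjVg ai.
    have cL : b * a \in 'L_n.+2(G) by rewrite -groupV.
    have zN : z^-1 \in 'N('L_n.+2(G)).
      by apply: (subsetP (lcn_norm _ _)); rewrite groupV.
    have -> : a = (b * a) ^ z^-1 by rewrite cE conjgK.
    by rewrite (memJ_norm _ zN).
  have [n Ln] := lcnP _ nilG.
  by move: (key n) a1; rewrite Ln inE => ->.
Qed.
End S.

Unset Implicit Arguments.
Theorem proposition3p2 (T : finType) (G : {group {perm T}}) :
  [transitive G, on [set: T] | 'P] ->
  (forall v : T, #|'C_G[v | 'P]| = 2) ->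
  ((exists2 P : {group {perm T}}, P \in 'Syl_2(G) & cyclic P) \/ nilpotent G) ->
  EKR G.
Proof.
move=> htr hst hc; rewrite /EKR; apply/eqP; rewrite eqn_leq; apply/andP; split.
- apply/bigmax_leqP => F /intersectingP [sFG Fi].
  case: (pickP T) => [v0 _ | T0]; last first.
    suff -> : #|F| = 0 by []. apply/eqP; rewrite cards_eq0; apply/eqP/setP => g; rewrite inE.
    apply/negbTE/negP => gF; have [v _] := Fi g g gF gF.
    by have := T0 v.
  apply: leq_trans (leq_bigmax v0); rewrite hst leqNgt; apply/negP => F3.
  have [g gF] : exists g, g \in F.
    by apply/set0Pn; rewrite -card_gt0 (ltn_trans _ F3).
  have F2 : 1 < #|F :\ g| by move: F3; rewrite (cardsD1 g F) gF.
  have [h hF'] : exists h, h \in F :\ g.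
    by apply/set0Pn; rewrite -card_gt0 (ltn_trans _ F2).
  have F1 : 0 < #|F :\ g :\ h| by move: F2; rewrite (cardsD1 h (F :\ g)) hF'.
  have [k kF''] : exists k, k \in F :\ g :\ h by apply/set0Pn; rewrite -card_gt0.
  move: hF' kF''; rewrite !in_setD1 => /andP[hg hF] /andP[kh /andP[kg kF]].
  have gG := subsetP sFG g gF; have hG := subsetP sFG h hF.
  have kG := subsetP sFG k kF.
  have [u eu] := Fi g h gF hF; have [w ew] := Fi h k hF kF.
  have [x ex] := Fi g k gF kF.
  have aC := diff_stab gG hG eu; have bC := diff_stab hG kG ew.
  have cC := diff_stab gG kG ex.
  have E : (k * h^-1) * (h * g^-1) = k * g^-1 by rewrite -mulgA mulKg.
  apply: (no_triangle (x := x) htr hst hc aC bC); rewrite ?E //.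
  - by apply/eqP => e; move/eqP: hg; apply; apply: (mulIg g^-1); rewrite mulgV e.
  - by apply/eqP => e; move/eqP: kh; apply; apply: (mulIg h^-1); rewrite mulgV e.
  - by apply/eqP => e; move/eqP: kg; apply; apply: (mulIg g^-1); rewrite mulgV e.
- apply/bigmax_leqP => v _.
  apply: (leq_bigmax_cond (F := fun F : {set {perm T}} => #|F|) ('C_G[v | 'P])).
  apply/intersectingP; split; first exact: subsetIl.
  move=> g h /(stab_memP G) [_ gv] /(stab_memP G) [_ hv]; exists v.
  by rewrite gv hv.
Qed.
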